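(* Let $n\ge 2$, and let $L=(\ell_1,\dots,\ell_n)\in\mathbb{R}^n$ and $K=(k_1,\dots,k_n)\in\mathbb{R}^n$ satisfy $0<k_i<\ell_i$ for all $1\le i\le n$. Let $\Lambda\subset\mathbb{R}^n$ be the lattice generated by the rows of the $n\times n$ matrix $$\mathbf{G}=\begin{bmatrix} \ell_1 & -k_2 & 0 & \cdots & 0 & 0\\ 0 & \ell_2 & -k_3 & \cdots & 0 & 0\\ \vdots & & \ddots & \ddots & & \vdots\\ 0 & 0 & \cdots & \ell_{n-2} & -k_{n-1} & 0\\ 0 & 0 & \cdots & 0 & \ell_{n-1} & -k_n\\ -k_1 & 0 & \cdots & 0 & 0 & \ell_n \end{bmatrix},$$ i.e. row $i$ ($1\le i\le n-1$) has $\ell_i$ in column $i$ and $-k_{i+1}$ in column $i+1$, and row $n$ has $-k_1$ in column $1$ and $\ell_n$ in column $n$, all other entries being $0$. Then $\Lambda$ is a lattice tiling of $\mathbb{R}^n$ with $\mathcal{S}_{L,K}$.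
   Context: For $L,K\in\mathbb{R}^n$ with $0<k_i<\ell_i$, the $n$-dimensional chair is $\mathcal{S}_{L,K}=\{(x_1,\dots,x_n)\in\mathbb{R}^n: 0\le x_i<\ell_i \text{ for all } i, \text{ and there exists } j \text{ with } x_j<\ell_j-k_j\}$. For a set $\mathcal{S}\subset\mathbb{R}^n$ and $U\in\mathbb{R}^n$, $U+\mathcal{S}=\{U+X: X\in\mathcal{S}\}$. A set $P\subseteq\mathbb{R}^n$ is a packing of $\mathbb{R}^n$ with $\mathcal{S}$ if the translates $X+\mathcal{S}$, $X\in P$, have pairwise non-intersecting interiors; it is a tiling if moreover the union of the closures of these translates is $\mathbb{R}^n$. A lattice is the set of all integer linear combinations of $n$ linearly independent vectors of $\mathbb{R}^n$ (its basis); a lattice $\Lambda$ is a lattice tiling with $\mathcal{S}$ if its point set is a tiling with $\mathcal{S}$. *)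

(* Defs.v *)
From HB Require Import structures.
From mathcomp Require Import all_boot all_order all_algebra.
From mathcomp Require Import all_classical all_reals all_analysis.
Set Implicit Arguments. Unset Strict Implicit. Unset Printing Implicit Defensive.
Import Order.TTheory GRing.Theory Num.Theory.
Import numFieldNormedType.Exports.
Local Open Scope classical_set_scope.
Local Open Scope ring_scope.

Definition chair (R : realType) (n : nat) (L K : 'rV[R]_n) : set 'rV[R]_n :=
  [set x | (forall i, 0 <= x ord0 i /\ x ord0 i < L ord0 i) /\
           (exists j, x ord0 j < L ord0 j - K ord0 j)].

Definition translate (R : realType) (n : nat) (U : 'rV[R]_n) (S : set 'rV[R]_n)
  : set 'rV[R]_n := [set U + x | x in S].

Definition is_packing (R : realType) (n : nat) (P S : set 'rV[R]_n) : Prop :=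
  forall X Y, P X -> P Y -> X <> Y ->
    interior (translate X S) `&` interior (translate Y S) = set0.

Definition is_tiling (R : realType) (n : nat) (P S : set 'rV[R]_n) : Prop :=
  is_packing P S /\ \bigcup_(X in P) closure (translate X S) = setT.

Definition lattice_of (R : realType) (n : nat) (B : 'M[R]_n) : set 'rV[R]_n :=
  [set v | exists z : 'I_n -> int, v = \sum_(i < n) (z i)%:~R *: row i B].

Definition lattice_tiling (R : realType) (n : nat) (B : 'M[R]_n) (S : set 'rV[R]_n)
  : Prop := row_free B /\ is_tiling (lattice_of B) S.

Definition chairG (R : realType) (n : nat) (L K : 'rV[R]_n) : 'M[R]_n :=
  \matrix_(i < n, j < n)
    if j == i then L ord0 i
    else if (j : nat) == ((i : nat).+1 %% n)%N then - K ord0 j else 0.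

(* Main.v *)
Require Import Defs.
From HB Require Import structures.
From mathcomp Require Import all_boot all_order all_algebra.
From mathcomp Require Import all_classical all_reals all_analysis.
From mathcomp Require Import zify ring lra.
Set Implicit Arguments. Unset Strict Implicit. Unset Printing Implicit Defensive.
Import Order.TTheory GRing.Theory Num.Theory.
Import numFieldNormedType.Exports.
Local Open Scope ring_scope.
Section Abstract.
Variable n' : nat.
Definition prv (j : 'I_n'.+1) : 'I_n'.+1 :=
  if val j is k.+1 then inord k else ord_max.

Variable f : 'I_n'.+1 -> int -> int.
Hypothesis mono : forall j a b, a <= b -> f j a <= f j b.
Hypothesis step : forall j a, f j (a + 1) <= f j a + 1.

Fixpoint Zs (m : int) (k : nat) : int :=
  if k is k'.+1 then f (inord k) (Zs m k') else m.
Definition Fc m := f ord0 (Zs m n').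

Definition valid (z : 'I_n'.+1 -> int) :=
  (forall j, z j = f j (z (prv j))) /\ exists j, f j (z (prv j) + 1) <= z j.

Lemma stepn j a (d : nat) : f j (a + d%:Z) <= f j a + d%:Z.
Proof.
elim: d => [|d IH]; first by rewrite !(addr0 _ : _ + 0%:Z = _).

rewrite -[d.+1]addn1 PoszD addrA.
apply: (le_trans (step _ _)).
by rewrite addrA lerD2r.
Qed.

Lemma Zs_mono a b k : a <= b -> Zs a k <= Zs b k.
Proof. by move=> ab; elim: k => [|k IH] //=; apply: mono. Qed.

Lemma Zs_stepn a (d : nat) k : Zs (a + d%:Z) k <= Zs a k + d%:Z.
Proof.
elim: k => [|k IH] //=.
apply: le_trans (stepn _ _ _); exact: mono.
Qed.

Lemma Fc_mono a b : a <= b -> Fc a <= Fc b.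
Proof. by move=> ab; apply: mono; apply: Zs_mono. Qed.

Lemma Fc_stepn a (d : nat) : Fc (a + d%:Z) <= Fc a + d%:Z.
Proof. apply: le_trans (stepn _ _ _); apply: mono; exact: Zs_stepn. Qed.

Lemma prv_S k : (k.+1 <= n')%N -> prv (inord k.+1) = inord k.
Proof. by move=> h; rewrite /prv /= inordK. Qed.

Lemma prv0 : prv ord0 = inord n'.
Proof. by apply: val_inj; rewrite /= inordK. Qed.

Lemma valid_Zs z : valid z -> forall k, (k <= n')%N -> z (inord k) = Zs (z ord0) k.
Proof.
case=> hz _; elim=> [|k IH] hk /=.
  by congr z; apply: val_inj; rewrite /= inordK.
rewrite hz prv_S // IH //; exact: ltnW.
Qed.

Lemma valid_fix z : valid z -> Fc (z ord0) = z ord0.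
Proof.
move=> v; rewrite /Fc -(valid_Zs v (leqnn _)) -prv0.
by case: v => hz _; rewrite -hz.
Qed.

Lemma valid_next z : valid z -> Fc (z ord0 + 1) <= z ord0.
Proof.
move=> v; have [hz [j hj]] := v.
set m := z ord0.
have H1 : forall k, (k <= n')%N -> Zs (m + 1) k <= Zs m k + 1.
  by move=> k _; exact: (Zs_stepn m 1 k).
case: (posnP (val j)) => [j0|jpos].
  have ej : j = ord0 by apply: val_inj.
  rewrite ej in hj.
  move: hj; rewrite prv0 (valid_Zs v (leqnn _)) -/m => hj.
  rewrite /Fc; apply: le_trans hj; apply: mono; exact: H1.
have H2 : forall k, (val j <= k <= n')%N -> Zs (m + 1) k <= Zs m k.
  move=> k /andP[]; elim: k => [|k IH]; first by rewrite leqn0 => /eqP e; rewrite e in jpos.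
  rewrite leq_eqVlt => /orP[/eqP ek|jk] kn.
    have ej : j = inord k.+1 by apply: val_inj; rewrite /= inordK // -ek.
    have e1 : z (prv j) = Zs m k.
      rewrite ej prv_S //; move: (valid_Zs v) => H; rewrite H //; exact: ltnW.
    have e2 : z j = Zs m k.+1.
      by rewrite ej; move: (valid_Zs v) => H; rewrite H // -ek.
    rewrite e1 e2 in hj.
    change (f (inord k.+1) (Zs (m+1) k) <= Zs m k.+1); rewrite -ej.
    apply: le_trans hj; apply: mono; apply: H1; exact: ltnW.
  by rewrite /=; apply: mono; apply: IH => //; exact: ltnW.
rewrite /Fc; apply: le_trans (_ : f ord0 (Zs m n') <= _).
  by apply: mono; apply: H2; rewrite leqnn andbT -ltnS ltn_ord.
by rewrite -/(Fc m) valid_fix.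
Qed.

Lemma no_lt z w : valid z -> valid w -> z ord0 < w ord0 -> False.
Proof.
move=> vz vw lt.
set d := absz ((w ord0 - z ord0 - 1)%R).
have ed : w ord0 = z ord0 + 1 + d%:Z.
  rewrite /d gez0_abs; first by lia.
  lia.
have := Fc_stepn (z ord0 + 1) d; rewrite -ed (valid_fix vw).
have := valid_next vz; lia.
Qed.

Lemma valid_uniq z w : valid z -> valid w -> forall j, z j = w j.
Proof.
move=> vz vw.
have e0 : z ord0 = w ord0.
  case: (ltgtP (z ord0) (w ord0)) => // h; exfalso.
    exact: (no_lt vz vw).
  exact: (no_lt vw vz).
move=> j; have -> : j = inord (val j) by rewrite inord_val.
have hj : (val j <= n')%N by rewrite -ltnS ltn_ord.
move: (valid_Zs vz) (valid_Zs vw) => Hz Hw.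
by rewrite Hz // Hw // e0.
Qed.

Lemma ivt (N : nat) : forall a, a <= Fc a -> Fc (a + N%:Z) < a + N%:Z ->
  exists m, m <= Fc m /\ Fc (m + 1) < m + 1.
Proof.
elim: N => [|N IH] a ha hb.
  by move: hb; rewrite addr0 ltNge ha.
case: (leP (a + 1) (Fc (a + 1))) => h.
  apply: (IH (a + 1)) => //.
  have e : a + 1 + N%:Z = a + N.+1%:Z by lia.
  by rewrite e.
by exists a.
Qed.

Lemma exists_valid a b : a <= b -> a <= Fc a -> Fc b < b -> exists z, valid z.
Proof.
move=> ab ha hb.
have [m [h1 h2]] : exists m, m <= Fc m /\ Fc (m + 1) < m + 1.
  have e : a + (absz (b - a)%R)%:Z = b.
    by rewrite gez0_abs ?subr_ge0 // addrC subrK.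
  have := @ivt (absz (b - a)%R) a ha; rewrite e; exact.
have fm : Fc m = m.
  apply/eqP; rewrite eq_le h1 andbT.
  have : m <= m + 1 by lia.
  move/Fc_mono; lia.
exists (fun j => Zs m (val j)); split.
  move=> j; case ej: (val j) => [|k].
    rewrite /prv ej /=; have -> : j = ord0 by apply: val_inj.
    by rewrite -[LHS]fm.
  rewrite /= /prv ej inordK; last by move: (ltn_ord j); rewrite ej => /ltnW.
  by congr (f _ _); apply: val_inj; rewrite /= inordK // -ej ltn_ord.
case: (boolP [exists j, f j (Zs m (val (prv j)) + 1) <= Zs m (val j)]).
  by move/existsP.
move/existsPn => H; exfalso.
have H3 : forall k, (k <= n')%N -> Zs m k + 1 <= Zs (m + 1) k.
  elim=> [|k IH] // kn /=.
  have := H (inord k.+1); rewrite -ltNge /prv /= !inordK // => [h|]; last by rewrite ltnS ltnW.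
  apply: le_trans (mono _ (IH (ltnW kn))); move: h => /=; lia.
have := H ord0; rewrite -ltNge /prv /= => h.
have : Fc m + 1 <= Fc (m + 1).
  apply: le_trans (mono _ (H3 _ (leqnn _))); rewrite fm; lia.
lia.
Qed.

Lemma Fc_lo a : (forall j, a <= f j a) -> a <= Fc a.
Proof.
move=> h.
have H : forall k, a <= Zs a k.
  elim=> [|k IH] //=; apply: le_trans (h (inord k.+1)) _; exact: mono.
apply: le_trans (h ord0) _; exact: mono.
Qed.

Lemma Fc_hi b : (forall j, f j b < b) -> Fc b < b.
Proof.
move=> h.
have H : forall k, Zs b k <= b.
  elim=> [|k IH] //=; apply: le_trans (ltW (h (inord k.+1))); exact: mono.
apply: le_lt_trans (h ord0); exact: mono.
Qed.
End Abstract.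

Local Open Scope classical_set_scope.
Local Open Scope ring_scope.
Section Real.
Variables (R : realType) (n' : nat) (L K : 'rV[R]_n'.+1).
Hypothesis n1 : (1 <= n')%N.

Lemma valprv (j : 'I_n'.+1) : val (prv j) = if val j is k.+1 then k else n'.
Proof.
rewrite /prv; case ej: (val j) => [|k] //=.
by rewrite inordK //; move: (ltn_ord j); rewrite ej => /ltnW.
Qed.

Lemma nextE (i j : 'I_n'.+1) :
  (val j == (val i).+1 %% n'.+1)%N = (i == prv j).
Proof.
rewrite -val_eqE valprv /=; have hi := ltn_ord i; have hj := ltn_ord j.
case: (ltnP i.+1 n'.+1) => h.
  rewrite modn_small //; case: (nat_of_ord j) hj => [|k] hk; apply/eqP/eqP; lia.
have e : i.+1 = n'.+1 by lia.
rewrite e modnn; case: (nat_of_ord j) hj => [|k] hk; apply/eqP/eqP; lia.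
Qed.

Lemma prv_neq (j : 'I_n'.+1) : (prv j != j).
Proof.
rewrite -val_eqE valprv /=; case: (nat_of_ord j) => [|k]; apply/eqP; lia.
Qed.

Lemma coordE (c : 'I_n'.+1 -> R) j :
  (\sum_i c i *: row i (chairG L K)) ord0 j = L ord0 j * c j - K ord0 j * c (prv j).
Proof.
rewrite summxE.
under eq_bigr => i _ do rewrite !mxE nextE.
rewrite (bigD1 j) //= eqxx (bigD1 (prv j)) /=; last by rewrite prv_neq.
rewrite eq_sym (negbTE (prv_neq j)) eqxx big1; first by ring.
move=> i /andP[ij ipj]; rewrite eq_sym (negbTE ij) (negbTE ipj); ring.
Qed.


Hypothesis hKL : forall i, 0 < K ord0 i /\ K ord0 i < L ord0 i.

Definition fx (x : 'rV[R]_n'.+1) (j : 'I_n'.+1) (m : int) : int :=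
  Num.floor ((x ord0 j + K ord0 j * m%:~R) / L ord0 j).

Lemma Lpos j : 0 < L ord0 j.
Proof. by have [h1 h2] := hKL j; apply: lt_trans h2. Qed.

Lemma fx_mono x j a b : a <= b -> fx x j a <= fx x j b.
Proof.
move=> ab; apply: le_floor; rewrite ler_pM2r ?invr_gt0 ?Lpos // lerD2l.
by rewrite ler_pM2l ?ler_int //; case: (hKL j).
Qed.

Lemma fx_step x j a : fx x j (a + 1) <= fx x j a + 1.
Proof.
rewrite -ltzD1 /fx floor_lt_int -addrA intrD.
have := floorD1_gt ((x ord0 j + K ord0 j * a%:~R) / L ord0 j).
rewrite intrD.
set u := (x ord0 j + K ord0 j * a%:~R) / L ord0 j.
set q := ((Num.floor u)%:~R : R).
have hL := Lpos j; have [hK1 hK2] := hKL j.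
have e : (x ord0 j + K ord0 j * (a%:~R + 1)) / L ord0 j = u + K ord0 j / L ord0 j.
  by rewrite /u; field; rewrite gt_eqF.
have : K ord0 j / L ord0 j < 1 by rewrite ltr_pdivrMr // mul1r.
rewrite e; lra.
Qed.

Lemma box_iff (x : 'rV[R]_n'.+1) (a b : int) j :
  ((0 <= x ord0 j - (L ord0 j * a%:~R - K ord0 j * b%:~R)) /\
   (x ord0 j - (L ord0 j * a%:~R - K ord0 j * b%:~R) < L ord0 j)) <-> a = fx x j b.
Proof.
have hL := Lpos j.
rewrite /fx; split.
  move=> [h1 h2]; apply/eqP; rewrite eq_sym floor_eq intrD.
  rewrite ler_pdivlMr // ltr_pdivrMr //; apply/andP; split; lra.
move=> e; have : (Num.floor ((x ord0 j + K ord0 j * b%:~R) / L ord0 j) == a) by rewrite e.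
rewrite floor_eq intrD ler_pdivlMr // ltr_pdivrMr // => /andP[h1 h2]; split; lra.
Qed.

Lemma spec_iff (x : 'rV[R]_n'.+1) (a b : int) j :
  (x ord0 j - (L ord0 j * a%:~R - K ord0 j * b%:~R) < L ord0 j - K ord0 j)
   <-> fx x j (b + 1) <= a.
Proof.
have hL := Lpos j.
rewrite /fx -ltzD1 floor_lt_int !intrD ltr_pdivrMr //; split => h; lra.
Qed.

Definition combo (z : 'I_n'.+1 -> int) : 'rV[R]_n'.+1 :=
  \sum_(i < n'.+1) (z i)%:~R *: row i (chairG L K).

Lemma chair_valid (x : 'rV[R]_n'.+1) z : chair L K (x - combo z) <-> valid (fx x) z.
Proof.
have cE : forall j, (x - combo z) ord0 j =
   x ord0 j - (L ord0 j * (z j)%:~R - K ord0 j * (z (prv j))%:~R).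
  by move=> j; rewrite !mxE /combo (coordE (fun i => (z i)%:~R)).
rewrite /chair /valid /=; split.
  move=> [hb [j hj]]; split.
    by move=> i; apply/box_iff; rewrite -cE; exact: hb.
  by exists j; apply/spec_iff; rewrite -cE.
move=> [hz [j hj]]; split.
  by move=> i; rewrite cE; apply/box_iff; exact: hz.
by exists j; rewrite cE; apply/spec_iff.
Qed.

Lemma exists_T (x : 'rV[R]_n'.+1) :
  exists T : int, (0 <= T) /\ forall j, `|x ord0 j| < (L ord0 j - K ord0 j) * T%:~R.
Proof.
set s := \sum_(j < n'.+1) `|x ord0 j| / (L ord0 j - K ord0 j).
have dpos : forall j, 0 < L ord0 j - K ord0 j.
  by move=> j; rewrite subr_gt0; case: (hKL j).
have s0 : 0 <= s by apply: sumr_ge0 => j _; rewrite divr_ge0 // ltW.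
exists (Num.floor s + 1); split.
  by apply: addr_ge0; rewrite ?floor_ge0.
move=> j.
have h1 : `|x ord0 j| / (L ord0 j - K ord0 j) <= s.
  rewrite /s (bigD1 j) //= lerDl; apply: sumr_ge0 => i _; by rewrite divr_ge0 // ltW // dpos.
have h2 := floorD1_gt s.
rewrite mulrC -ltr_pdivrMr //; exact: le_lt_trans h1 h2.
Qed.

Lemma ker_trivial (u : 'rV[R]_n'.+1) : u *m chairG L K = 0 -> u = 0.
Proof.
move=> h.
have hc : forall j, L ord0 j * u ord0 j = K ord0 j * u ord0 (prv j).
  move=> j; have := congr1 (fun M : 'rV[R]_n'.+1 => M ord0 j) h.
  rewrite mulmx_sum_row coordE mxE /= => /eqP; rewrite subr_eq0 => /eqP //.
set jm := ([arg max_(i > ord0) `|u ord0 i|])%O.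
have hmax : forall i, `|u ord0 i| <= `|u ord0 jm|.
  by rewrite /jm; case: arg_maxP => //= j _ hj i; exact: hj.
have hz : `|u ord0 jm| <= 0.
  have := hmax (prv jm); have [hK1 hK2] := hKL jm.
  have e' : L ord0 jm * `|u ord0 jm| = K ord0 jm * `|u ord0 (prv jm)|.
    by rewrite -(ger0_norm (ltW (Lpos jm))) -normrM hc normrM ger0_norm // ltW.
  have := normr_ge0 (u ord0 jm); have := normr_ge0 (u ord0 (prv jm)).
  nra.
apply/rowP => i; rewrite mxE; apply/normr0_eq0; apply/le_anti.
by rewrite normr_ge0 andbT (le_trans (hmax i)).
Qed.

End Real.

Unset Implicit Arguments.
Theorem mainTheorem1 (R : realType) (n : nat) (L K : 'rV[R]_n) :
  (2 <= n)%N ->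
  (forall i, 0 < K ord0 i /\ K ord0 i < L ord0 i) ->
  lattice_tiling (chairG L K) (chair L K).
Proof.
case: n L K => [|[|n']] L K // n2 hKL.
have n1 : (1 <= n'.+1)%N by [].
split.
  rewrite -kermx_eq0; apply/eqP/row_matrixP => i; rewrite row0.
  apply: (ker_trivial n1 hKL); apply/sub_kermxP; exact: row_sub.
split.
  move=> X Y [z ->] [w ->] neq; apply/seteqP; split => // p [].
  move=> /interior_subset [a Sa eXa] /interior_subset [b Sb eYb].
  have vz : valid (fx L K p) z.
    apply/(chair_valid n1 hKL); rewrite /combo -eXa addrC addKr //.
  have vw : valid (fx L K p) w.
    apply/(chair_valid n1 hKL); rewrite /combo -eYb addrC addKr //.
  apply: neq; apply: eq_bigr => i _.
  by rewrite (valid_uniq (@fx_mono _ _ L K hKL p) (@fx_step _ _ L K hKL p) vz vw i).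
apply/seteqP; split => // x _.
have [T [T0 hT]] := exists_T hKL x.
have [z vz] : exists z, valid (fx L K x) z.
  apply: (exists_valid (@fx_mono _ _ L K hKL x) (a := - T) (b := T)).
  - lia.
  - apply: (Fc_lo (@fx_mono _ _ L K hKL x)) => j.
    have hL := Lpos hKL j; have := hT j.
    have /andP[h1 h2] : - `|x ord0 j| <= x ord0 j <= `|x ord0 j| by rewrite -ler_norml.
    rewrite /fx floor_ge_int ler_pdivlMr // intrN; lra.
  - apply: (Fc_hi (@fx_mono _ _ L K hKL x)) => j.
    have hL := Lpos hKL j; have := hT j.
    have /andP[h1 h2] : - `|x ord0 j| <= x ord0 j <= `|x ord0 j| by rewrite -ler_norml.
    rewrite /fx floor_lt_int ltr_pdivrMr //; lra.
exists (combo L K z); first by exists z.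
apply: subset_closure; exists (x - combo L K z).
  exact/(chair_valid n1 hKL).
by rewrite addrC subrK.
Qed.
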